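(* Let $\mathcal{Q}_{\mathrm{con}}$ be the set of isomorphism classes of finite connected quandles, regarded as an abelian monoid under cartesian product, and let $\mathbb{Z}\{\mathcal{Q}_{\mathrm{con}}\}$ be its monoid ring. There is an isomorphism of rings $$\mathrm{B}(\mathcal{Q})\cong\mathbb{Z}\{\mathcal{Q}_{\mathrm{con}}\}$$ between the Burnside ring of finite quandles and this monoid ring, under which $b(Q)$ corresponds to $[Q]$ for every finite connected quandle $Q$.
   Context: A rack is a set $R$ with a binary operation $\rhd$ such that every left multiplication $\ell_a\colon b\mapsto a\rhd b$ is a bijection and $a\rhd(b\rhd c)=(a\rhd b)\rhd(a\rhd c)$ for all $a,b,c$; a quandle is a rack with $a\rhd a=a$ for all $a$. Products of quandles are cartesian products with componentwise operation; the singleton quandle is the unit. The inner automorphism group $\mathrm{Inn}(R)$ is the subgroup of the symmetric group on $R$ generated by all $\ell_a$; a rack is connected if it is non-empty and $\mathrm{Inn}(R)$ acts transitively on $R$. The product of two connected quandles is connected, so $\mathcal{Q}_{\mathrm{con}}$ is an abelian monoid. A subrack of $R$ is a subset $S$ with $\ell_s(S)=S$ for all $s\in S$; a decomposition of $R$ into $S$ and $T$ means $S,T$ are disjoint subracks (possibly empty) with $S\cup T=R$. The Burnside ring of finite quandles $\mathrm{B}(\mathcal{Q})$ is the abelian group generated by symbols $b(Q)$, one for each finite quandle $Q$, subject to $b(Q_1)=b(Q_2)$ whenever $Q_1\cong Q_2$ and $b(Q)=b(S)+b(T)$ whenever $Q$ decomposes into $S$ and $T$; it is a commutative ring with $b(Q)b(Q')=b(Q\times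 Q')$. *)

(* Defs.v *)
From HB Require Import structures.
From mathcomp Require Import all_boot all_order all_algebra all_fingroup.
Set Implicit Arguments. Unset Strict Implicit. Unset Printing Implicit Defensive.
Import GRing.Theory.

(* A finite magma: a finite carrier with a binary operation (a |> b = mop a b). *)
Record magma := Magma { mcar : finType; mop : mcar -> mcar -> mcar }.

Definition is_rack (R : magma) : Prop :=
  (forall a : mcar R, bijective (mop a)) /\
  (forall a b c : mcar R, mop a (mop b c) = mop (mop a b) (mop a c)).

Definition is_quandle (R : magma) : Prop :=
  is_rack R /\ (forall a : mcar R, mop a a = a).

Definition inn (R : magma) : {set {perm mcar R}} :=
  <<[set p : {perm mcar R} | [exists a : mcar R, [forall x, p x == mop a x]]]>>%g.

Definition connected (R : magma) : Prop :=
  (0 < #|mcar R|)%N /\ (forall x y : mcar R, exists2 g, g \in inn R & g x = y).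

Definition is_conquandle (R : magma) : Prop := is_quandle R /\ connected R.

Definition iso (R S : magma) : Prop :=
  exists f : mcar R -> mcar S, bijective f /\
    (forall a b, f (mop a b) = mop (f a) (f b)).

Definition mprod (R S : magma) : magma :=
  @Magma _ (fun a b : (mcar R * mcar S)%type => (mop a.1 b.1, mop a.2 b.2)).

Definition munit : magma := @Magma _ (fun _ _ : unit => tt).

Definition subrack (R : magma) (A : {set mcar R}) : Prop :=
  forall s, s \in A -> (mop s) @: A = A.

Definition msub (R : magma) (A : {set mcar R}) : magma :=
  @Magma _ (fun x y : {x : mcar R | x \in A} => insubd x (mop (val x) (val y))).

Definition decomp (R S T : magma) : Prop :=
  exists A : {set mcar R}, [/\ subrack A, subrack (~: A), S = msub A & T = msub (~: A)].

(* Formal Z-linear combinations  sum_i z_i [Q_i]  *)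
Definition fsum := seq (int * magma).

Fixpoint fvalid (P : magma -> Prop) (x : fsum) : Prop :=
  match x with [::] => True | t :: x' => P t.2 /\ fvalid P x' end.

Definition fmul (x y : fsum) : fsum :=
  [seq ((t.1 * s.1)%R, mprod t.2 s.2) | t <- x, s <- y].

Definition fone : fsum := [:: (1%R, munit)].

(* Equality in the abelian group generated by symbols [Q] (Q with P Q),
   subject to [Q] = [Q'] for Q ~= Q' and to the extra relations
   [Q] = [S] + [T] whenever D Q S T.  Formal sums are lists; the
   rules swap/cons/cat/merge/zero present the free abelian group. *)
Inductive fs_eq (P : magma -> Prop) (D : magma -> magma -> magma -> Prop)
  : fsum -> fsum -> Prop :=
| fs_refl x : fs_eq P D x x
| fs_sym x y : fs_eq P D x y -> fs_eq P D y x
| fs_trans x y w : fs_eq P D x y -> fs_eq P D y w -> fs_eq P D x w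
| fs_cons t x y : fs_eq P D x y -> fs_eq P D (t :: x) (t :: y)
| fs_cat x y w : fs_eq P D x y -> fs_eq P D (x ++ w) (y ++ w)
| fs_swap t s x : fs_eq P D (t :: s :: x) (s :: t :: x)
| fs_merge z w Q x : P Q -> fs_eq P D ((z, Q) :: (w, Q) :: x) (((z + w)%R, Q) :: x)
| fs_zero Q x : P Q -> fs_eq P D ((0%R, Q) :: x) x
| fs_iso z Q Q' x : P Q -> P Q' -> iso Q Q' -> fs_eq P D ((z, Q) :: x) ((z, Q') :: x)
| fs_rel z Q S T x : P Q -> P S -> P T -> D Q S T ->
    fs_eq P D ((z, Q) :: x) ((z, S) :: (z, T) :: x).

(* Burnside ring B(Q): formal sums of finite quandles modulo isomorphism and
   decompositions. *)
Definition beq : fsum -> fsum -> Prop := fs_eq is_quandle decomp.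

(* Monoid ring Z{Q_con}: formal sums of finite connected quandles modulo
   isomorphism (i.e. free abelian group on iso classes). *)
Definition zeq : fsum -> fsum -> Prop := fs_eq is_conquandle (fun _ _ _ => False).

(* Main.v *)
Require Import Defs.
From HB Require Import structures.
From mathcomp Require Import all_boot all_order all_algebra all_fingroup.
From Stdlib Require Import ClassicalEpsilon Classical.
From mathcomp Require Import zify.
Set Implicit Arguments. Unset Strict Implicit. Unset Printing Implicit Defensive.
Import GRing.Theory.

Section FS.
Variables (P : magma -> Prop) (D : magma -> magma -> magma -> Prop).
Notation E := (fs_eq P D).

Lemma fs_app_l w x y : E x y -> E (w ++ x) (w ++ y).
Proof. elim: w => [|t w IH] //= H; apply: fs_cons; exact: IH. Qed.

Lemma fs_app x x' y y' : E x x' -> E y y' -> E (x ++ y) (x' ++ y').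
Proof. move=> H1 H2; apply: fs_trans (fs_cat _ H1) _; exact: fs_app_l. Qed.

Lemma fs_mid u t v : E (u ++ t :: v) (t :: u ++ v).
Proof.
elim: u => [|s u IH] /=; first exact: fs_refl.
apply: fs_trans (fs_cons s IH) _; exact: fs_swap.
Qed.

Lemma fs_comm u v : E (u ++ v) (v ++ u).
Proof.
elim: u => [|t u IH] /=; first by rewrite cats0; exact: fs_refl.
apply: fs_trans (fs_cons t IH) _; apply: fs_sym; exact: fs_mid.
Qed.

Lemma fs_swapb u v X : E (u ++ v ++ X) (v ++ u ++ X).
Proof. rewrite !catA; apply: fs_cat; exact: fs_comm. Qed.

Lemma fs_filter (p : pred (int * magma)) L : E L (filter p L ++ filter (predC p) L).
Proof.
elim: L => [|t L IH] /=; first exact: fs_refl.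
case: (p t) => /=; first exact: fs_cons.
apply: fs_trans (fs_cons t IH) _; apply: fs_sym; exact: fs_mid.
Qed.

Lemma fs_selfdup z Q S T x : P Q -> P S -> P T -> D Q S T -> iso S Q -> iso T Q ->
  E ((z, Q) :: x) x.
Proof.
move=> PQ PS PT DQ iS iT.
have dup : forall y, E ((z,Q) :: y) ((z,Q) :: (z,Q) :: y).
  move=> y; apply: fs_trans (fs_rel z y PQ PS PT DQ) _.
  apply: fs_trans (fs_iso D z _ PS PQ iS) _; apply: fs_cons; exact: fs_iso.
apply: fs_sym.
have h1 : E x (((z + - z)%R, Q) :: x) by apply: fs_sym; rewrite subrr; exact: fs_zero.
apply: fs_trans h1 _.
apply: fs_trans (fs_sym (fs_merge D _ _ _ PQ)) _.
apply: fs_trans (dup _) _.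
apply: fs_cons; apply: fs_trans (fs_merge D _ _ _ PQ) _.
rewrite subrr; exact: fs_zero.
Qed.
End FS.

Definition finvs (R : magma) (A : {set mcar R}) :=
  forall a x, x \in A -> mop a x \in A.
Definition sclosed (R : magma) (A : {set mcar R}) :=
  forall a b, a \in A -> b \in A -> mop a b \in A.

Lemma conn_inv R : connected R -> forall A : {set mcar R}, finvs A -> A = set0 \/ A = setT.
Proof.
move=> [_ Hc] A HA; case: (set_0Vmem A) => [->|[x xA]]; [by left|right].
apply/setP => y; rewrite inE; have [g gI <-] := Hc x y.
pose G := [set g : {perm mcar R} | [forall u, (u \in A) ==> (g u \in A)]].
have Gg : group_set G.
  apply/group_setP; split; first by rewrite inE; apply/forallP=> u; rewrite perm1 implybb.
  move=> p q; rewrite !inE => /forallP hp /forallP hq; apply/forallP => u.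
  apply/implyP => uA; rewrite permM; apply: (implyP (hq _)); exact: (implyP (hp _)).
have sub : inn R \subset Group Gg.
  rewrite /inn gen_subG; apply/subsetP => p; rewrite inE => /existsP [a /forallP ha].
  rewrite inE; apply/forallP => u; apply/implyP => uA; rewrite (eqP (ha u)); exact: HA.
by have := subsetP sub g gI; rewrite inE => /forallP /(_ x) /implyP; apply.
Qed.

Lemma inv_conn R : is_rack R -> 0 < #|mcar R| ->
  (forall A : {set mcar R}, finvs A -> A = set0 \/ A = setT) -> connected R.
Proof.
move=> [Hb _] H0 H; split => // x y.
pose lp a := perm (bij_inj (Hb a)).
pose A := [set (g : {perm mcar R}) x | g in inn R].
have x1 : x \in A by apply/imsetP; exists 1%g; [rewrite /inn group1 | rewrite perm1].
have fA : finvs A.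
  move=> a _ /imsetP [g gI ->]; apply/imsetP; exists (g * lp a)%g; last by rewrite permM permE.
  move: gI; rewrite /inn => gI; rewrite groupM //.
  apply: mem_gen; rewrite inE; apply/existsP; exists a; apply/forallP => u; by rewrite permE.
case: (H A fA) => [A0|AT]; first by move: x1; rewrite A0 inE.
have : y \in A by rewrite AT inE.
by case/imsetP => g gI ->; exists g.
Qed.

Lemma rack_prod R S : is_rack R -> is_rack S -> is_rack (mprod R S).
Proof.
move=> [Hb1 Hd1] [Hb2 Hd2]; split.
  move=> a; apply: injF_bij => -[x1 x2] [y1 y2] /= [] /(bij_inj (Hb1 a.1)) -> /(bij_inj (Hb2 a.2)) -> //.
by move=> a b c /=; rewrite Hd1 Hd2.
Qed.

Lemma quandle_prod R S : is_quandle R -> is_quandle S -> is_quandle (mprod R S).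
Proof.
move=> [r1 i1] [r2 i2]; split; first exact: rack_prod.
by move=> [a b] /=; rewrite i1 i2.
Qed.

Lemma quandle_unit : is_quandle munit.
Proof.
split; [split|] => //=.
  by move=> a; exists id => -[].
by move=> [].
Qed.

Lemma conn_unit : connected munit.
Proof.
split; first by rewrite card_unit.
by move=> [] []; exists 1%g; [rewrite /inn group1 | rewrite perm1].
Qed.

Lemma conn_prod R S : is_quandle R -> is_quandle S -> connected R -> connected S ->
  connected (mprod R S).
Proof.
move=> [r1 i1] [r2 i2] c1 c2; apply: inv_conn; first exact: rack_prod.
  by rewrite card_prod muln_gt0; case: c1 => ->; case: c2 => ->.
move=> A HA; case: (set_0Vmem A) => [->|[[x x'] xA]]; [by left|right].
have h1 : forall y, (y, x') \in A.
  pose A1 := [set y | (y, x') \in A].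
  have f1 : finvs A1.
    by move=> a y; rewrite !inE => h; have := HA (a, x') _ h; rewrite /= i2.
  case: (conn_inv c1 f1) => e y.
    have : x \in A1 by rewrite inE.
    by rewrite e inE.
  have : y \in A1 by rewrite e inE.
  by rewrite inE.
apply/setP => -[y y']; rewrite inE.
pose A2 := [set u | (y, u) \in A].
have f2 : finvs A2.
  by move=> a u; rewrite !inE => h; have := HA (y, a) _ h; rewrite /= i1.
case: (conn_inv c2 f2) => e.
  have : x' \in A2 by rewrite inE h1.
  by rewrite e inE.
have : y' \in A2 by rewrite e inE.
by rewrite inE.
Qed.

Lemma msub_val R (A : {set mcar R}) (x y : mcar (msub A)) : sclosed A ->
  val (mop x y) = mop (val x) (val y).
Proof. by move=> cl; rewrite /= insubdK //; apply: cl; exact: valP. Qed.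

Lemma finv_closed R (A : {set mcar R}) : finvs A -> sclosed A.
Proof. by move=> h a b _; exact: h. Qed.

Lemma quandle_msub R (A : {set mcar R}) : is_quandle R -> sclosed A -> is_quandle (msub A).
Proof.
move=> [[Hb Hd] Hi] cl; split; first split.
- move=> a; apply: injF_bij => u v /(congr1 val); rewrite !msub_val //.
  by move/(bij_inj (Hb _))/val_inj.
- by move=> a b c; apply: val_inj; rewrite !msub_val // Hd.
by move=> a; apply: val_inj; rewrite msub_val // Hi.
Qed.

Lemma finv_subrack R (A : {set mcar R}) : is_rack R -> finvs A -> subrack A /\ subrack (~: A).
Proof.
move=> [Hb _] HA.
have fA : forall s, (mop s) @: A = A.
  move=> s; apply/eqP; rewrite eqEcard card_imset ?leqnn ?andbT; last exact: bij_inj.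
  by apply/subsetP => _ /imsetP [y yA ->]; exact: HA.
split; first by move=> s _; exact: fA.
move=> s _; apply/eqP; rewrite eqEcard card_imset ?leqnn ?andbT; last exact: bij_inj.
apply/subsetP => _ /imsetP [y yA ->]; rewrite inE; apply/negP => h.
rewrite -(fA s) in h; case/imsetP: h => w wA /(bij_inj (Hb s)) e.
by rewrite inE e wA in yA.
Qed.

Lemma subrack_finv R (A : {set mcar R}) : is_rack R -> subrack A -> subrack (~: A) -> finvs A.
Proof.
move=> [Hb _] sA sC a x xA; case: (boolP (a \in A)) => aA.
  by rewrite -(sA a aA) imset_f.
apply/negPn/negP => h.
have : mop a x \in (mop a) @: ~: A by rewrite (sC a) ?inE.
by case/imsetP => w; rewrite inE => wA /(bij_inj (Hb a)) e; rewrite -e xA in wA.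
Qed.

Lemma finvC R (A : {set mcar R}) : is_rack R -> finvs A -> finvs (~: A).
Proof.
move=> r h; have [s1 s2] := finv_subrack r h.
by apply: subrack_finv => //; rewrite setCK.
Qed.

Lemma iso_refl R : iso R R.
Proof. by exists id; split => //; exists id. Qed.

Lemma iso_sym R S : iso R S -> iso S R.
Proof.
move=> [f [[g fg gf] hom]]; exists g; split; first by exists f.
by move=> a b; apply: (can_inj fg); rewrite hom !gf.
Qed.

Lemma card_noelt (T : finType) : #|T| = 0 -> T -> False.
Proof.
move=> H x; have : 0 < #|T| by apply/card_gt0P; exists x.
by rewrite H.
Qed.

Lemma iso_empty R S : #|mcar R| = 0 -> #|mcar S| = 0 -> iso R S.
Proof.
move=> h1 h2; pose f (x : mcar R) : mcar S := match card_noelt h1 x with end.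
pose g (x : mcar S) : mcar R := match card_noelt h2 x with end.
exists f; split; first by exists g => x; [case: (card_noelt h1 x) | case: (card_noelt h2 x)].
by move=> a; case: (card_noelt h1 a).
Qed.

Lemma iso_prod_l Q Q' B : iso Q Q' -> iso (mprod Q B) (mprod Q' B).
Proof.
move=> [f [[g fg gf] hom]].
exists (fun u : mcar (mprod Q B) => ((f u.1 : mcar Q'), u.2) : mcar (mprod Q' B)); split.
  by exists (fun u : mcar (mprod Q' B) => ((g u.1 : mcar Q), u.2) : mcar (mprod Q B)) => -[a b] /=; rewrite ?fg ?gf.
by move=> [a b] [c d] /=; rewrite hom.
Qed.

Lemma iso_swap Q B : iso (mprod B Q) (mprod Q B).
Proof.
exists (fun u : mcar (mprod B Q) => ((u.2, u.1) : mcar (mprod Q B))); split.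
  by exists (fun u : mcar (mprod Q B) => ((u.2, u.1) : mcar (mprod B Q))) => -[a b].
by move=> [a b] [c d].
Qed.

Lemma setX1P (T1 T2 : finType) (A : {set T1}) (u : T1 * T2) : u \in setX A setT -> u.1 \in A.
Proof. by case: u => a b; rewrite in_setX => /andP []. Qed.

Lemma setX1I (T1 T2 : finType) (A : {set T1}) (a : T1) (b : T2) : a \in A -> (a, b) \in setX A setT.
Proof. by rewrite in_setX inE andbT. Qed.

Lemma setCX1 (T1 T2 : finType) (A : {set T1}) : ~: setX A (setT : {set T2}) = setX (~: A) setT.
Proof. by apply/setP => -[a b]; rewrite !inE /= !andbT. Qed.

Lemma closedX Q B (A : {set mcar Q}) : sclosed A -> sclosed (setX A (setT : {set mcar B}) : {set mcar (mprod Q B)}).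
Proof. by move=> cl [a b] [c d]; rewrite !inE /= !andbT; exact: cl. Qed.

Lemma iso_sub_prod Q B (A : {set mcar Q}) : sclosed A ->
  iso (msub (setX A (setT : {set mcar B}) : {set mcar (mprod Q B)})) (mprod (msub A) B).
Proof.
move=> cl.
exists (fun x : mcar (msub (setX A (setT : {set mcar B}) : {set mcar (mprod Q B)})) =>
   ((exist (fun a => a \in A) (sval x).1 (setX1P (svalP x)), (sval x).2) : mcar (mprod (msub A) B))).
split.
  exists (fun u : mcar (mprod (msub A) B) =>
    (exist (fun v => v \in (setX A (setT : {set mcar B}) : {set mcar (mprod Q B)})) ((sval u.1, u.2) : mcar (mprod Q B)) (setX1I u.2 (svalP u.1))
      : mcar (msub (setX A (setT : {set mcar B}) : {set mcar (mprod Q B)})))).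
    by move=> [[a b] h]; apply: val_inj.
  by move=> [[a h] b] /=; congr pair; apply: val_inj.
have cx := closedX (B:=B) cl.
move=> x y; congr pair.
  apply: val_inj => /=; rewrite (msub_val x y cx) /= insubdK //.
  by apply: cl; [exact: (setX1P (svalP x)) | exact: (setX1P (svalP y))].
by rewrite /= (msub_val x y cx).
Qed.

Definition emb (C Q : magma) : {set {ffun mcar C -> mcar Q}} :=
  [set f : {ffun mcar C -> mcar Q} | injectiveb f &&
     [forall a, [forall b, f (mop a b) == mop (f a) (f b)]]].

Lemma embP C Q (f : {ffun mcar C -> mcar Q}) :
  f \in emb C Q <-> injective f /\ (forall a b, f (mop a b) = mop (f a) (f b)).
Proof.
rewrite inE; split.
  by case/andP => /injectiveP fi /forallP h; split => // a b; apply/eqP; move/forallP: (h a).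
move=> [fi h]; apply/andP; split; first exact/injectiveP.
by apply/forallP => a; apply/forallP => b; rewrite h.
Qed.

Lemma emb_iso C Q Q' : iso Q Q' -> #|emb C Q| <= #|emb C Q'|.
Proof.
move=> [p [pb hom]].
pose Phi (f : {ffun mcar C -> mcar Q}) : {ffun mcar C -> mcar Q'} := [ffun c => p (f c)].
have Pinj : injective Phi.
  move=> f g e; apply/ffunP => c; move/ffunP: e => /(_ c).
  by rewrite /Phi !ffunE => /(bij_inj pb).
rewrite -(card_imset _ Pinj); apply: subset_leq_card; apply/subsetP => _ /imsetP [f /embP [fi fh] ->].
apply/embP; split.
  by move=> a b; rewrite /Phi !ffunE => /(bij_inj pb) /fi.
by move=> a b; rewrite /Phi !ffunE fh hom.
Qed.

Lemma emb_iso_eq C Q Q' : iso Q Q' -> #|emb C Q| = #|emb C Q'|.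
Proof. by move=> i; apply/eqP; rewrite eqn_leq !emb_iso //; exact: iso_sym. Qed.

Lemma emb_sub C Q (X : {set mcar Q}) : sclosed X ->
  #|emb C (msub X)| = #|emb C Q :&: [set f : {ffun mcar C -> mcar Q} | [forall c, f c \in X]]|.
Proof.
move=> cl.
pose Phi (g : {ffun mcar C -> mcar (msub X)}) : {ffun mcar C -> mcar Q} := [ffun c => val (g c)].
have Pinj : injective Phi.
  move=> f g e; apply/ffunP => c; move/ffunP: e => /(_ c).
  by rewrite /Phi !ffunE => /val_inj.
rewrite -(card_imset _ Pinj).
suff -> : Phi @: emb C (msub X) = emb C Q :&: [set f : {ffun mcar C -> mcar Q} | [forall c, f c \in X]] by [].
apply/eqP; rewrite eqEsubset; apply/andP; split.
  apply/subsetP => _ /imsetP [g /embP [gi gh] ->]; rewrite inE; apply/andP; split.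
    apply/embP; split; first by move=> a b; rewrite /Phi !ffunE => /val_inj /gi.
    by move=> a b; rewrite /Phi !ffunE gh msub_val.
  by rewrite inE; apply/forallP => c; rewrite /Phi ffunE; exact: valP.
apply/subsetP => f; rewrite inE => /andP [/embP [fi fh]]; rewrite inE => /forallP H.
pose g : {ffun mcar C -> mcar (msub X)} := [ffun c => (exist (fun x => x \in X) (f c) (H c) : mcar (msub X))].
apply/imsetP; exists g.
  apply/embP; split.
    by move=> a b; rewrite !ffunE => -[] /fi.
  by move=> a b; apply: val_inj; rewrite msub_val // !ffunE /= fh.
by apply/ffunP => c; rewrite /Phi !ffunE.
Qed.

Lemma emb_dec C Q (A : {set mcar Q}) : connected C -> is_rack Q -> finvs A ->
  #|emb C Q| = #|emb C (msub A)| + #|emb C (msub (~: A))|.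
Proof.
move=> cC rQ fA.
have fC := finvC rQ fA.
rewrite (emb_sub _ (finv_closed fA)) (emb_sub _ (finv_closed fC)).
rewrite -(cardsID [set f : {ffun mcar C -> mcar Q} | [forall c, f c \in A]] (emb C Q)).
congr (_ + _); apply: eq_card => f; rewrite in_setD in_setI.
case Ef: (f \in emb C Q); rewrite ?andbF ?andbT //.
have [c0 _] : exists c0 : mcar C, c0 \in mcar C by apply/card_gt0P; case: cC.
move/embP: Ef => [fi fh].
pose B := [set c | f c \in A].
have fB : finvs B by move=> a c; rewrite !inE fh; exact: fA.
rewrite !inE; case: (conn_inv cC fB) => e.
  have H : forall c, f c \notin A.
    move=> c; have : c \notin B by rewrite e inE.
    by rewrite inE.
  have -> : [forall c, f c \in ~: A] by apply/forallP => c; rewrite inE H.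
  by apply/negP => /forallP /(_ c0); rewrite (negbTE (H c0)).
have H : forall c, f c \in A.
  move=> c; have : c \in B by rewrite e inE.
  by rewrite inE.
rewrite /=; have -> : [forall c, f c \in A] by apply/forallP.
by apply/esym/negP => /forallP /(_ c0); rewrite inE H.
Qed.

Section RS. Local Open Scope ring_scope.

Definition mark (C : magma) (L : fsum) : int :=
  \sum_(t <- L) t.1 * (#|emb C t.2|)%:Z.

Lemma mark_cons C t L : mark C (t :: L) = t.1 * (#|emb C t.2|)%:Z + mark C L.
Proof. by rewrite /mark big_cons. Qed.

Lemma mark_cat C L1 L2 : mark C (L1 ++ L2) = mark C L1 + mark C L2.
Proof. by rewrite /mark big_cat. Qed.

Lemma mark_inv C : connected C -> forall x y, beq x y -> mark C x = mark C y.
Proof.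
move=> cC x y; elim => {x y}.
- by [].
- by move=> x y _ ->.
- by move=> x y w _ -> _ ->.
- by move=> t x y _ e; rewrite !mark_cons e.
- by move=> x y w _ e; rewrite !mark_cat e.
- by move=> t s x; rewrite !mark_cons addrCA.
- by move=> z w Q x _; rewrite !mark_cons /= addrA mulrDl.
- by move=> Q x _; rewrite mark_cons mul0r add0r.
- by move=> z Q Q' x _ _ i; rewrite !mark_cons /= (emb_iso_eq C i).
move=> z Q S T x [rQ _] _ _ [A [sA sC -> ->]].
rewrite !mark_cons /= addrA -mulrDr -PoszD.
by rewrite -(emb_dec cC rQ (subrack_finv rQ sA sC)).
Qed.

Lemma zeq_beq x y : zeq x y -> beq x y.
Proof.
elim => {x y}.
- move=> x; exact: fs_refl.
- move=> x y _; exact: fs_sym.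
- move=> x y w _ h1 _; exact: fs_trans.
- move=> t x y _; exact: fs_cons.
- move=> x y w _; exact: fs_cat.
- move=> t s x; exact: fs_swap.
- move=> z w Q x [h _]; exact: fs_merge.
- move=> Q x [h _]; exact: fs_zero.
- move=> z Q Q' x [h _] [h' _]; exact: fs_iso.
by [].
Qed.

Definition pdec (Pr : Prop) : bool := if excluded_middle_informative Pr then true else false.
Lemma pdecP Pr : reflect Pr (pdec Pr).
Proof. by rewrite /pdec; case: excluded_middle_informative => h; constructor. Qed.

Lemma fvalid_impl (P1 P2 : magma -> Prop) L : (forall Q, P1 Q -> P2 Q) -> fvalid P1 L -> fvalid P2 L.
Proof. by move=> h; elim: L => [|t L IH] //= [a b]; split; [exact: h | exact: IH]. Qed.

Lemma fvalid_cat P L1 L2 : fvalid P (L1 ++ L2) <-> fvalid P L1 /\ fvalid P L2.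
Proof.
elim: L1 => [|t L IH] /=; first by split => // -[].
by rewrite IH; split => [[a [b c]]|[[a b] c]].
Qed.

Lemma fvalid_filter (P1 P2 : magma -> Prop) (q : pred (int * magma)) L : (forall t, q t -> P1 t.2 -> P2 t.2) ->
  fvalid P1 L -> fvalid P2 (filter q L).
Proof.
move=> h; elim: L => [|t L IH] //= [a b]; case E: (q t) => /=; last exact: IH.
by split; [exact: h | exact: IH].
Qed.

Lemma fvalid_and (P1 P2 : magma -> Prop) L : fvalid P1 L -> fvalid P2 L ->
  fvalid (fun Q => P1 Q /\ P2 Q) L.
Proof. by elim: L => [|t L IH] //= [a b] [c d]; split; [split | exact: IH]. Qed.

Lemma merge_iso D L : is_conquandle D -> fvalid (fun Q => is_conquandle Q /\ iso Q D) L ->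
  zeq L [:: (\sum_(t <- L) t.1, D)].
Proof.
move=> cD; elim: L => [|[z Q] L IH] /=.
  by move=> _; rewrite big_nil; apply: fs_sym; apply: fs_zero.
move=> [[cQ iQ] vL]; rewrite big_cons /=.
apply: fs_trans (fs_cons _ (IH vL)) _.
apply: fs_trans (fs_iso _ _ _ cQ cD iQ) _.
exact: fs_merge.
Qed.

Lemma max_exists L : L <> [::] -> exists D, (exists2 t, List.In t L & D = t.2) /\
  has (fun t => pdec (iso t.2 D)) L /\ fvalid (fun E => (#|mcar E| <= #|mcar D|)%N) L.
Proof.
elim: L => [//|t L IH] _.
have [->|ne] : L = [::] \/ L <> [::] by case: L {IH}; [left|right].
  exists t.2; split; first by exists t => //=; left.
  split; first by rewrite /= (introT (pdecP _) (iso_refl _)).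
  by split.
have [D [[s sL eD] [hD mD]]] := IH ne.
case: (leqP #|mcar t.2| #|mcar D|) => le.
  exists D; split; first by exists s => //=; right.
  by split => //=; rewrite hD orbT.
exists t.2; split; first by exists t => //=; left.
split => /=; first by rewrite (introT (pdecP _) (iso_refl _)).
split => //; apply: fvalid_impl mD => E h; apply: leq_trans h (ltnW le).
Qed.

Lemma fvalid_In P L t : fvalid P L -> List.In t L -> P t.2.
Proof. elim: L => [|s L IH] //= [a b] [<-|h] //; exact: IH. Qed.

Lemma mark_zero_other D R : fvalid (fun E => ~ iso E D /\ (#|mcar E| <= #|mcar D|)%N) R -> mark D R = 0.
Proof.
elim: R => [|[z E] R IH] /=; first by rewrite /mark big_nil.
move=> [[ni le] vR]; rewrite mark_cons IH // addr0 /=.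
case: (set_0Vmem (emb D E)) => [->|[f /embP [fi fh]]]; first by rewrite cards0 mulr0.
exfalso; apply: ni; apply: iso_sym; exists f; split => //.
exact: inj_card_bij.
Qed.

Lemma emb_self_pos D : (0 < #|emb D D|)%N.
Proof.
apply/card_gt0P; exists [ffun x => x]; apply/embP; split.
  by move=> a b; rewrite !ffunE.
by move=> a b; rewrite !ffunE.
Qed.

Lemma zero_marks n L : (size L <= n)%N -> fvalid is_conquandle L ->
  (forall C, is_conquandle C -> mark C L = 0) -> zeq L [::].
Proof.
elim: n L => [|n IH] L.
  by case: L => // _ _ _; apply: fs_refl.
move=> sL vL mL.
have [->|ne] : L = [::] \/ L <> [::] by case: L {sL vL mL}; [left|right].
  exact: fs_refl.
have [D [[t tL eD] [hD mx]]] := max_exists ne.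
have cD : is_conquandle D by rewrite eD; exact: fvalid_In vL tL.
pose p := fun t : int * magma => pdec (iso t.2 D).
have e1 : zeq L (filter p L ++ filter (predC p) L) by apply: fs_filter.
have vF : fvalid (fun Q => is_conquandle Q /\ iso Q D) (filter p L).
  by apply: fvalid_filter vL => s /pdecP.
have e2 := merge_iso cD vF.
set R := filter (predC p) L.
have vR : fvalid is_conquandle R by apply: fvalid_filter vL.
have oR : fvalid (fun E => ~ iso E D /\ (#|mcar E| <= #|mcar D|)%N) R.
  apply: fvalid_filter mx => s /= /negP h le; split => // i; apply: h; exact/pdecP.
set S := \sum_(t <- filter p L) t.1.
have e3 : zeq L ((S, D) :: R) := fs_trans e1 (fs_cat R e2).
have mD := mL D cD.
rewrite (mark_inv cD.2 (zeq_beq e3)) mark_cons /= (mark_zero_other oR) addr0 in mD.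
have S0 : S = 0.
  move/eqP: mD; rewrite mulf_eq0 => /orP [/eqP //|].
  by rewrite -[0]/(Posz 0) eqz_nat; have := emb_self_pos D; case: #|emb D D|.
have e4 : zeq L R.
  by apply: fs_trans e3 _; rewrite S0; apply: fs_zero.
apply: (fs_trans e4); apply: IH => //.
  rewrite /R size_filter -ltnS; apply: leq_trans sL.
  have := count_predC p L; have := has_count p L; rewrite hD; lia.
by move=> C cC; rewrite -(mark_inv cC.2 (zeq_beq e4)); exact: mL.
Qed.

Definition negl (L : fsum) : fsum := map (fun t => (- t.1, t.2)) L.

Lemma negl_cancel L : fvalid is_conquandle L -> zeq (negl L ++ L) [::].
Proof.
elim: L => [|[z Q] L IH] /=; first by move=> _; apply: fs_refl.
move=> [cQ vL].
apply: fs_trans; first by apply: fs_cons; apply: fs_mid.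
apply: fs_trans; first by apply: fs_merge cQ.
rewrite addNr; apply: fs_trans; first by apply: fs_zero cQ.
exact: IH.
Qed.

Lemma fvalid_negl P L : fvalid P L -> fvalid P (negl L).
Proof. by elim: L => [|t L IH] //= [a b]; split => //; exact: IH. Qed.

Lemma mark_negl C L : mark C (negl L) = - mark C L.
Proof. by rewrite /mark big_map -sumrN; apply: eq_bigr => t _; rewrite mulNr. Qed.

Lemma coreU L1 L2 : fvalid is_conquandle L1 -> fvalid is_conquandle L2 -> beq L1 L2 -> zeq L1 L2.
Proof.
move=> v1 v2 h.
have z0 : zeq (L1 ++ negl L2) [::].
  apply: (@zero_marks (size (L1 ++ negl L2))) => //.
    by apply/fvalid_cat; split => //; exact: fvalid_negl.
  by move=> C cC; rewrite mark_cat mark_negl (mark_inv cC.2 h) subrr.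
have e1 : zeq (L1 ++ (negl L2 ++ L2)) L1.
  by rewrite -{2}(cats0 L1); apply: fs_app_l; exact: negl_cancel.
apply: fs_trans (fs_sym e1) _; rewrite catA.
exact: (fs_cat L2 z0).
Qed.

Lemma card_msub Q (A : {set mcar Q}) : #|mcar (msub A)| = #|A|.
Proof. by rewrite card_sig; apply: eq_card => x; rewrite !inE. Qed.

Lemma exist_dec_n n : forall Q, #|mcar Q| = n -> is_quandle Q -> forall z,
  exists L, fvalid is_conquandle L /\ forall x, beq ((z,Q)::x) (L ++ x).
Proof.
elim/ltn_ind: n => n IH Q sQ qQ z.
case: (classic (connected Q)) => cQ.
  by exists [:: (z, Q)]; split => //= x; apply: fs_refl.
case: (posnP #|mcar Q|) => [Q0 | Qpos].
  exists [::]; split => // x /=.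
  have f0 : finvs (set0 : {set mcar Q}) by move=> a y; rewrite inE.
  have fC := finvC qQ.1 f0.
  have [s1 s2] := finv_subrack qQ.1 f0.
  have cS : #|mcar (msub (set0 : {set mcar Q}))| = 0%N by rewrite card_msub cards0.
  have cT : #|mcar (msub (~: (set0 : {set mcar Q})))| = 0%N.
    by apply/eqP; rewrite card_msub -leqn0 -Q0 max_card.
  apply: (@fs_selfdup _ _ z Q (msub set0) (msub (~: set0))) => //.
  - exact: quandle_msub (finv_closed f0).
  - exact: quandle_msub (finv_closed fC).
  - by exists set0.
  - exact: iso_empty.
  - exact: iso_empty.
have : ~ (forall A : {set mcar Q}, finvs A -> A = set0 \/ A = setT).
  by move=> h; apply: cQ; apply: inv_conn qQ.1 Qpos h.
move/not_all_ex_not; case=> A H.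
have [fA H2] := imply_to_and _ _ H; have [An0 AnT] := not_or_and _ _ H2.
have fC := finvC qQ.1 fA.
have [s1 s2] := finv_subrack qQ.1 fA.
have qS := quandle_msub qQ (finv_closed fA).
have qT := quandle_msub qQ (finv_closed fC).
have c1 : (0 < #|A|)%N by rewrite card_gt0; apply/eqP.
have c2 : (0 < #|~: A|)%N.
  rewrite card_gt0; apply/negP => /eqP h; apply: AnT; by rewrite -(setCK A) h setC0.
have c3 := cardsC A.
have lS : (#|A| < n)%N by rewrite -sQ -c3; lia.
have lT : (#|~: A| < n)%N by rewrite -sQ -c3; lia.
have [LS [vS hS]] := IH _ lS (msub A) (card_msub A) qS z.
have [LT [vT hT]] := IH _ lT (msub (~: A)) (card_msub _) qT z.
exists (LS ++ LT); split; first by apply/fvalid_cat.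
move=> x; have DQ : decomp Q (msub A) (msub (~: A)) by exists A.
apply: fs_trans (fs_rel z x qQ qS qT DQ) _.
apply: fs_trans (hS _) _; rewrite -catA; apply: fs_app_l; exact: hT.
Qed.

Lemma exist_dec Q z : is_quandle Q ->
  exists L, fvalid is_conquandle L /\ forall x, beq ((z,Q)::x) (L ++ x).
Proof. by move=> qQ; apply: exist_dec_n. Qed.

Lemma exist_list x : fvalid is_quandle x -> exists L, fvalid is_conquandle L /\ beq x L.
Proof.
elim: x => [|[z Q] x IH] /=; first by exists [::]; split => //; apply: fs_refl.
move=> [qQ vx]; have [L1 [v1 h1]] := exist_dec z qQ.
have [L2 [v2 h2]] := IH vx.
exists (L1 ++ L2); split; first by apply/fvalid_cat.
apply: fs_trans (h1 x) _; exact: fs_app_l.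
Qed.

Lemma iso_trans R S T : iso R S -> iso S T -> iso R T.
Proof.
move=> [f [[g fg gf] hf]] [f' [[g' fg' gf'] hf']].
exists (f' \o f); split.
  by exists (g \o g') => x /=; rewrite ?fg' ?fg ?gf ?gf'.
by move=> a b /=; rewrite hf hf'.
Qed.

Lemma decomp_q Q S T : is_quandle Q -> decomp Q S T -> is_quandle S /\ is_quandle T.
Proof.
move=> qQ [A [sA sC -> ->]]; have fA := subrack_finv qQ.1 sA sC.
split; apply: (quandle_msub qQ); apply: finv_closed => //; exact: (finvC qQ.1 fA).
Qed.

Lemma rel_prod_l c Q S T B Y : is_quandle Q -> is_quandle B -> decomp Q S T ->
  beq ((c, mprod Q B) :: Y) ((c, mprod S B) :: (c, mprod T B) :: Y).
Proof.
move=> qQ qB [A [sA sC -> ->]].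
have fA := subrack_finv qQ.1 sA sC; have fC := finvC qQ.1 fA.
pose A' : {set mcar (mprod Q B)} := setX A setT.
have fA' : finvs A' by move=> [a b] [x y]; rewrite !inE /= !andbT; exact: fA.
have qP := quandle_prod qQ qB.
have fC' := finvC qP.1 fA'.
have [s1 s2] := finv_subrack qP.1 fA'.
have D' : decomp (mprod Q B) (msub A') (msub (~: A')) by exists A'.
have q1 := quandle_msub qP (finv_closed fA').
have q2 := quandle_msub qP (finv_closed fC').
have qS := quandle_msub qQ (finv_closed fA).
have qT := quandle_msub qQ (finv_closed fC).
apply: fs_trans (fs_rel c Y qP q1 q2 D') _.
apply: fs_trans (fs_iso _ c _ q1 (quandle_prod qS qB) (iso_sub_prod B (finv_closed fA))) _.
apply: fs_cons; move: q2; rewrite /A' setCX1 => q2.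
exact: (fs_iso _ c _ q2 (quandle_prod qT qB) (iso_sub_prod B (finv_closed fC))).
Qed.

Lemma rel_prod_r c Q S T B Y : is_quandle Q -> is_quandle B -> decomp Q S T ->
  beq ((c, mprod B Q) :: Y) ((c, mprod B S) :: (c, mprod B T) :: Y).
Proof.
move=> qQ qB DQ; have [qS qT] := decomp_q qQ DQ.
apply: fs_trans (fs_iso _ c _ (quandle_prod qB qQ) (quandle_prod qQ qB) (iso_swap Q B)) _.
apply: fs_trans (rel_prod_l c Y qQ qB DQ) _.
apply: fs_trans (fs_iso _ c _ (quandle_prod qS qB) (quandle_prod qB qS) (iso_swap B S)) _.
apply: fs_cons; exact: (fs_iso _ c _ (quandle_prod qT qB) (quandle_prod qB qT) (iso_swap B T)).
Qed.

Definition FL (h : int * magma -> fsum) (a : fsum) : fsum := flatten (map h a).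
Lemma FL_cons h t x : FL h (t :: x) = h t ++ FL h x. Proof. by []. Qed.
Lemma FL_cat h x y : FL h (x ++ y) = FL h x ++ FL h y.
Proof. by rewrite /FL map_cat flatten_cat. Qed.

Lemma FLcong h :
  (forall z w Q X, is_quandle Q -> beq (h (z,Q) ++ h (w,Q) ++ X) (h ((z+w)%R,Q) ++ X)) ->
  (forall Q X, is_quandle Q -> beq (h (0%R,Q) ++ X) X) ->
  (forall z Q Q', is_quandle Q -> is_quandle Q' -> iso Q Q' -> beq (h (z,Q)) (h (z,Q'))) ->
  (forall z Q S T, is_quandle Q -> is_quandle S -> is_quandle T -> decomp Q S T ->
      beq (h (z,Q)) (h (z,S) ++ h (z,T))) ->
  forall a a', beq a a' -> beq (FL h a) (FL h a').
Proof.
move=> Hm Hz Hi Hr a a'; elim => {a a'}.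
- move=> x; exact: fs_refl.
- move=> x y _; exact: fs_sym.
- move=> x y w _ h1 _; exact: fs_trans.
- by move=> t x y _ IH; rewrite !FL_cons; exact: fs_app_l.
- by move=> x y w _ IH; rewrite !FL_cat; exact: fs_cat.
- by move=> t s x; rewrite !FL_cons; exact: fs_swapb.
- by move=> z w Q x qQ; rewrite !FL_cons; exact: Hm.
- by move=> Q x qQ; rewrite FL_cons; exact: Hz.
- by move=> z Q Q' x q q' i; rewrite !FL_cons; apply: fs_cat; exact: Hi.
by move=> z Q S T x q1 q2 q3 d; rewrite !FL_cons catA; apply: fs_cat; exact: Hr.
Qed.

Section Left.
Variable b : fsum.
Hypothesis vb : fvalid is_quandle b.
Definition hL (t : int * magma) : fsum := map (fun s => ((t.1 * s.1)%R, mprod t.2 s.2)) b.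

Lemma hL_m z w Q X : is_quandle Q -> beq (hL (z,Q) ++ hL (w,Q) ++ X) (hL ((z+w)%R,Q) ++ X).
Proof.
rewrite /hL; move=> qQ; elim: b vb => [|[c B] b' IH] /=; first by move=> _; apply: fs_refl.
move=> [qB vb'].
apply: fs_trans; first by apply: fs_cons; apply: fs_mid.
apply: fs_trans; first by apply: fs_merge; exact: quandle_prod.
rewrite -mulrDl; apply: fs_cons; exact: IH.
Qed.

Lemma hL_z Q X : is_quandle Q -> beq (hL (0%R,Q) ++ X) X.
Proof.
rewrite /hL; move=> qQ; elim: b vb => [|[c B] b' IH] /=; first by move=> _; apply: fs_refl.
move=> [qB vb']; rewrite mul0r.
apply: fs_trans; first by apply: fs_zero; exact: quandle_prod.
exact: IH.
Qed.

Lemma hL_i z Q Q' : is_quandle Q -> is_quandle Q' -> iso Q Q' -> beq (hL (z,Q)) (hL (z,Q')).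
Proof.
rewrite /hL; move=> qQ qQ' i; elim: b vb => [|[c B] b' IH] /=; first by move=> _; apply: fs_refl.
move=> [qB vb'].
apply: fs_trans; first by apply: fs_cons; exact: IH.
apply: fs_iso; [exact: quandle_prod | exact: quandle_prod | exact: iso_prod_l].
Qed.

Lemma hL_r z Q S T : is_quandle Q -> is_quandle S -> is_quandle T -> decomp Q S T ->
  beq (hL (z,Q)) (hL (z,S) ++ hL (z,T)).
Proof.
rewrite /hL; move=> qQ qS qT d; elim: b vb => [|[c B] b' IH] /=; first by move=> _; apply: fs_refl.
move=> [qB vb'].
apply: (fs_trans (rel_prod_l _ _ qQ qB d)).
apply: fs_cons; apply: fs_trans; first by apply: fs_cons; exact: IH.
apply: fs_sym; exact: fs_mid.
Qed.

Lemma left_cong a a' : beq a a' -> beq (fmul a b) (fmul a' b).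
Proof.
have e : forall x, fmul x b = FL hL x by [].
rewrite !e; apply: FLcong; [exact: hL_m | exact: hL_z | exact: hL_i | exact: hL_r].
Qed.
End Left.

Section Right.
Variables (c : int) (B : magma).
Hypothesis qB : is_quandle B.
Definition hR (s : int * magma) : fsum := [:: ((c * s.1)%R, mprod B s.2)].

Lemma right1_cong a a' : beq a a' ->
  beq (map (fun s => ((c * s.1)%R, mprod B s.2)) a) (map (fun s => ((c * s.1)%R, mprod B s.2)) a').
Proof.
have e : forall x, map (fun s => ((c * s.1)%R, mprod B s.2)) x = FL hR x.
  by elim=> //= s x ->.
rewrite !e; apply: FLcong.
- move=> z w Q X qQ; rewrite /hR /= mulrDr; apply: fs_merge; exact: quandle_prod.
- move=> Q X qQ; rewrite /hR /= mulr0; apply: fs_zero; exact: quandle_prod.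
- move=> z Q Q' qQ qQ' i; rewrite /hR; apply: fs_iso; try exact: quandle_prod.
  apply: iso_trans (iso_swap Q B) _; apply: iso_trans (iso_prod_l B i) _; exact: iso_swap.
- by move=> z Q S T qQ qS qT d; rewrite /hR /=; apply: rel_prod_r.
Qed.
End Right.

Lemma right_cong b a a' : fvalid is_quandle b -> beq a a' -> beq (fmul b a) (fmul b a').
Proof.
elim: b => [|[c B] b IH] /=; first by move=> _ _; apply: fs_refl.
move=> [qB vb] h; apply: fs_app; [exact: right1_cong | exact: IH].
Qed.
End RS.

Lemma fvalid_fmul (P : magma -> Prop) x y : (forall Q R, P Q -> P R -> P (mprod Q R)) ->
  fvalid P x -> fvalid P y -> fvalid P (fmul x y).
Proof.
move=> hP; elim: x => [|[z Q] x IH] //= [pQ vx] vy.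
apply/fvalid_cat; split; last exact: IH.
clear IH vx; elim: y vy => [|[w R] y IHy] //= [pR vy]; split; [exact: hP | exact: IHy].
Qed.

Lemma con_prod Q R : is_conquandle Q -> is_conquandle R -> is_conquandle (mprod Q R).
Proof. by move=> [q1 c1] [q2 c2]; split; [exact: quandle_prod | exact: conn_prod]. Qed.

Lemma con_q L : fvalid is_conquandle L -> fvalid is_quandle L.
Proof. by apply: fvalid_impl => Q []. Qed.

Lemma ex_F x : exists L, fvalid is_quandle x -> fvalid is_conquandle L /\ beq x L.
Proof.
case: (classic (fvalid is_quandle x)) => h.
  by have [L HL] := exist_list h; exists L.
by exists [::].
Qed.

Definition Fm (x : fsum) : fsum := proj1_sig (constructive_indefinite_description _ (ex_F x)).

Lemma FmP x : fvalid is_quandle x -> fvalid is_conquandle (Fm x) /\ beq x (Fm x).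
Proof. by rewrite /Fm; case: constructive_indefinite_description => L HL. Qed.

Theorem theorem7p4 :
  exists F : fsum -> fsum,
     (forall x, fvalid is_quandle x -> fvalid is_conquandle (F x))
  /\ (forall x y, fvalid is_quandle x -> fvalid is_quandle y ->
         beq x y -> zeq (F x) (F y))
  /\ (forall x y, fvalid is_quandle x -> fvalid is_quandle y ->
         zeq (F (x ++ y)) (F x ++ F y))
  /\ (forall x y, fvalid is_quandle x -> fvalid is_quandle y ->
         zeq (F (fmul x y)) (fmul (F x) (F y)))
  /\ zeq (F fone) fone
  /\ (forall x y, fvalid is_quandle x -> fvalid is_quandle y ->
         zeq (F x) (F y) -> beq x y)
  /\ (forall y, fvalid is_conquandle y ->
         exists2 x, fvalid is_quandle x & zeq (F x) y)
  /\ (forall Q, is_quandle Q -> connected Q ->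
         zeq (F [:: (1%R, Q)]) [:: (1%R, Q)]).
Proof.
exists Fm; split; first by move=> x vx; exact: (FmP vx).1.
split.
  move=> x y vx vy h; apply: coreU; [exact: (FmP vx).1 | exact: (FmP vy).1 |].
  exact: fs_trans (fs_sym (FmP vx).2) (fs_trans h (FmP vy).2).
split.
  move=> x y vx vy; have vxy : fvalid is_quandle (x ++ y) by apply/fvalid_cat.
  apply: coreU; first exact: (FmP vxy).1.
    by apply/fvalid_cat; split; [exact: (FmP vx).1 | exact: (FmP vy).1].
  apply: fs_trans (fs_sym (FmP vxy).2) _; exact: fs_app (FmP vx).2 (FmP vy).2.
split.
  move=> x y vx vy; have vxy : fvalid is_quandle (fmul x y).
    by apply: fvalid_fmul => // Q R; exact: quandle_prod.
  apply: coreU; first exact: (FmP vxy).1.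
    by apply: fvalid_fmul; [exact: con_prod | exact: (FmP vx).1 | exact: (FmP vy).1].
  apply: fs_trans (fs_sym (FmP vxy).2) _.
  apply: fs_trans (left_cong vy (FmP vx).2) _.
  exact: right_cong (con_q (FmP vx).1) (FmP vy).2.
have cone : fvalid is_conquandle fone by split => //; split; [exact: quandle_unit | exact: conn_unit].
split.
  have v1 := con_q cone.
  apply: coreU => //; first exact: (FmP v1).1.
  exact: fs_sym (FmP v1).2.
split.
  move=> x y vx vy /zeq_beq h.
  exact: fs_trans (FmP vx).2 (fs_trans h (fs_sym (FmP vy).2)).
split.
  move=> y vy; have vy' := con_q vy; exists y => //.
  apply: coreU => //; first exact: (FmP vy').1.
  exact: fs_sym (FmP vy').2.
move=> Q qQ cQ; have v : fvalid is_conquandle [:: (1%R, Q)] by [].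
have v' := con_q v.
apply: coreU => //; first exact: (FmP v').1.
exact: fs_sym (FmP v').2.
Qed.
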